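(* Let $0<x<1$ and put $g=x\frac{1+x+x^2}{(1+4x+x^2)^2}$. For integers $s\ge 0$ let $$R_s=\frac{1+4x+x^2}{1+x+x^2}\,\frac{(1-x^s)(1-x^{s+3})}{(1-x^{s+1})(1-x^{s+2})}$$ (so $R_0=0$), and for integers $s,t\ge 0$ let $$X_{s,t}=\frac{(1-x^3)(1-x^{s+1})(1-x^{t+1})(1-x^{s+t+3})}{(1-x)(1-x^{s+3})(1-x^{t+3})(1-x^{s+t+1})}.$$ Then $X_{s,0}=X_{0,t}=1$, and for all $s,t\ge 0$ $$X_{s,t}=1+g\,R_sR_t\,X_{s,t}\bigl(1+g\,R_{s+1}R_{t+1}X_{s+1,t+1}\bigr).$$ Moreover, for every $s\ge 1$, $$\log\!\left(\frac{X_{s,s}X_{s-1,s-1}}{X_{s-1,s}X_{s,s-1}}\right)=\log\left\{\frac{(1-x^{2s+3})(1-x^{2s})^2}{(1-x^{2s-1})(1-x^{2s+2})^2}\right\}.$$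
   Context: The quantity $X_{s,t}$ at $z=1$ is the generating function (weight $g$ per edge) of labelled chains with left labels $\ge 1-s$ and right labels $\ge 1-t$; the displayed recursion is the equation characterizing it, and the logarithmic expression is the generating function $F_s(g,1)$ of bi-pointed planar quadrangulations (weight $g$ per face) whose two marked vertices are at graph distance $2s$. *)

(* Defs.v *)
From Stdlib Require Import Reals.
Open Scope R_scope.

Definition gq (x : R) : R := x * (1 + x + x^2) / (1 + 4*x + x^2)^2.

Definition Rs (x : R) (s : nat) : R :=
  (1 + 4*x + x^2) / (1 + x + x^2)
  * ((1 - x^s) * (1 - x^(s+3)) / ((1 - x^(s+1)) * (1 - x^(s+2)))).

Definition Xst (x : R) (s t : nat) : R :=
  (1 - x^3) * (1 - x^(s+1)) * (1 - x^(t+1)) * (1 - x^(s+t+3))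
  / ((1 - x) * (1 - x^(s+3)) * (1 - x^(t+3)) * (1 - x^(s+t+1))).

(* Main.v *)
Require Import Defs.
From Stdlib Require Import Reals Lra Lia.
Open Scope R_scope.
Lemma ne1 x p : 0 < x < 1 -> 0 <= p <= 1 -> 1 - p * x <> 0.
Proof. intros; nra. Qed.
Lemma powb x n : 0 < x < 1 -> 0 < x^n <= 1.
Proof. intros H; induction n; simpl; nra. Qed.
Definition Rf x a := (1 + 4*x + x^2) / (1 + x + x^2) * ((1 - a) * (1 - a*x^3) / ((1 - a*x^1) * (1 - a*x^2))).
Definition Xf x a b := (1 - x^3) * (1 - a*x^1) * (1 - b*x^1) * (1 - a*b*x^3)
  / ((1 - x) * (1 - a*x^3) * (1 - b*x^3) * (1 - a*b*x^1)).
Lemma keyrec x a b : 0<x<1 -> 0<a<=1 -> 0<b<=1 ->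
  let R := Rf x in let X := Xf x in
  X a b = 1 + gq x * R a * R b * X a b * (1 + gq x * R (a*x) * R (b*x) * X (a*x) (b*x)).
Proof.
intros Hx Ha Hb R X. unfold R, X, Rf, Xf, gq.
assert (1 + x + x^2 > 0) by nra. assert (1 + 4*x + x^2 > 0) by nra.
assert (H1: forall p, 0 <= p <= 1 -> 1 - p*x <> 0) by (intros; apply ne1; auto).
pose proof (powb x 1 Hx). pose proof (powb x 2 Hx). pose proof (powb x 3 Hx). pose proof (powb x 4 Hx). assert (0 < a*b <= 1) by nra.
assert (0 < a*b*x^2 <= 1) by nra. assert (0 < a*b*x^4 <= 1) by nra.
assert (1 - a*x^1 <> 0). rewrite pow_1. apply H1; lra.
assert (1 - a*x^2 <> 0). replace (a*x^2) with ((a*x)*x) by ring. apply H1; nra.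
assert (1 - a*x^3 <> 0). replace (a*x^3) with ((a*x^2)*x) by ring. apply H1; nra.
assert (1 - b*x^1 <> 0). rewrite pow_1. apply H1; lra.
assert (1 - b*x^2 <> 0). replace (b*x^2) with ((b*x)*x) by ring. apply H1; nra.
assert (1 - b*x^3 <> 0). replace (b*x^3) with ((b*x^2)*x) by ring. apply H1; nra.
assert (1 - a*x*x^3 <> 0). replace (a*x*x^3) with ((a*x^3)*x) by ring. apply H1; nra.
assert (1 - b*x*x^3 <> 0). replace (b*x*x^3) with ((b*x^3)*x) by ring. apply H1; nra.
assert (1 - a*b*x^1 <> 0). rewrite pow_1. apply H1; nra.
assert (1 - a*b*x^3 <> 0). replace (a*b*x^3) with ((a*b*x^2)*x) by ring. apply H1; nra.
assert (1 - a*x*(b*x)*x^1 <> 0). replace (a*x*(b*x)*x^1) with ((a*b*x^2)*x) by ring. apply H1; nra.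
assert (1 - a*x*(b*x)*x^3 <> 0). replace (a*x*(b*x)*x^3) with ((a*b*x^4)*x) by ring. apply H1.
 lra.
assert (1 - x <> 0) by lra. assert (1 - x^3 <> 0) by (replace (x^3) with (x^2*x) by ring; apply H1; lra).
field; repeat split; auto.
all: try lra. all: intro E; nra.
Qed.
Lemma RsE x s : Rs x s = Rf x (x^s).
Proof. unfold Rs, Rf. rewrite !pow_add. reflexivity. Qed.
Lemma XstE x s t : Xst x s t = Xf x (x^s) (x^t).
Proof. unfold Xst, Xf. rewrite !pow_add. reflexivity. Qed.
Lemma powS x s : x^(S s) = x^s * x.
Proof. simpl. ring. Qed.

Theorem mainTheorem1 (x : R) (hx0 : 0 < x) (hx1 : x < 1) :
  Rs x 0 = 0 /\
  (forall s : nat, Xst x s 0 = 1) /\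
  (forall t : nat, Xst x 0 t = 1) /\
  (forall s t : nat,
     Xst x s t =
       1 + gq x * Rs x s * Rs x t * Xst x s t
           * (1 + gq x * Rs x (S s) * Rs x (S t) * Xst x (S s) (S t))) /\
  (forall s : nat, (1 <= s)%nat ->
     ln (Xst x s s * Xst x (s - 1) (s - 1)
         / (Xst x (s - 1) s * Xst x s (s - 1)))
     = ln ((1 - x^(2*s+3)) * (1 - x^(2*s))^2
           / ((1 - x^(2*s-1)) * (1 - x^(2*s+2))^2))).
Proof.
assert (Hx : 0 < x < 1) by lra.
assert (H1: forall p, 0 <= p <= 1 -> 1 - p*x <> 0) by (intros; apply ne1; auto).
assert (1 - x <> 0) by lra.
pose proof (powb x 2 Hx). pose proof (powb x 3 Hx).
assert (1 - x^3 <> 0) by (replace (x^3) with (x^2*x) by ring; apply H1; lra).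
split; [| split; [| split; [| split]]].
- unfold Rs. simpl. field. split; nra.
- intro s. rewrite XstE. unfold Xf. simpl pow at 2 4 7. rewrite Rmult_1_l.
  pose proof (powb x s Hx). field.
  repeat split; auto; intro E; nra.
- intro s. rewrite XstE. unfold Xf. simpl pow at 1 5. rewrite !Rmult_1_l.
  pose proof (powb x s Hx). field.
  repeat split; auto; intro E; nra.
- intros s t. rewrite !RsE, !XstE, !powS. apply keyrec; auto; apply powb; auto.
- intros s Hs. destruct s as [|n]; [lia|]. replace (S n - 1)%nat with n by lia.
  f_equal. rewrite !XstE, !powS.
  replace (2 * S n - 1)%nat with (n+n+1)%nat by lia.
  replace (2 * S n + 3)%nat with (n+n+5)%nat by lia.
  replace (2 * S n)%nat with (n+n+2)%nat by lia.
  replace (2 * S n + 2)%nat with (n+n+4)%nat by lia.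
  rewrite !pow_add. unfold Xf.
  pose proof (powb x n Hx) as Hc. set (c := x^n) in *.
  pose proof (powb x 4 Hx). pose proof (powb x 5 Hx).
  assert (0 < c*c <= 1) by nra.
  field_simplify_eq. 2: { repeat split; auto. 
    all: match goal with |- 1 - ?P <> 0 => intro E;
      apply (H1 (P / x)); [split; [apply Rmult_le_pos; [|left; apply Rinv_0_lt_compat]; nra|
        apply (Rmult_le_reg_r x); [lra|]; unfold Rdiv; rewrite Rmult_assoc, Rinv_l, Rmult_1_r; nra]
       | unfold Rdiv; rewrite Rmult_assoc, Rinv_l; lra] end. }
  ring.
Qed.
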